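(* If $G$ is a tree, then $\mathcal{P}(G)=\mathcal{T}(G)$.
   Context: A tree is a connected graph with no cycle. A co-2-plex is a vertex set inducing a subgraph of maximum degree at most 1. $\mathcal{P}(G)=\mathrm{conv}\{\chi^S : S\text{ co-2-plex of } G\}\subseteq\mathbb{R}^V$. $\mathcal{T}(G)$ is the polytope of $x\in\mathbb{R}^V$ satisfying $0\le x\le 1$ and $x(W)+(|W|-1)x_w\le|W|$ for all $w\in V$ and $W\subseteq N(w)$, where $x(A)=\sum_{a\in A}x_a$. *)

(* Defs.v *)
From HB Require Import structures.
From mathcomp Require Import all_boot all_order all_algebra.
Set Implicit Arguments. Unset Strict Implicit. Unset Printing Implicit Defensive.
Import Order.TTheory GRing.Theory Num.Theory.
Local Open Scope ring_scope.

Definition simple_graph (V : finType) (e : rel V) : Prop :=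
  symmetric e /\ irreflexive e.

Definition connected_graph (V : finType) (e : rel V) : Prop :=
  forall u v : V, connect e u v.

Definition acyclic_graph (V : finType) (e : rel V) : Prop :=
  forall p : seq V, (3 <= size p)%N -> ~~ ucycleb e p.

Definition is_tree (V : finType) (e : rel V) : Prop :=
  simple_graph e /\ (0 < #|V|)%N /\ connected_graph e /\ acyclic_graph e.

Definition nbhd (V : finType) (e : rel V) (w : V) : {set V} := [set u | e w u].

Definition co2plex (V : finType) (e : rel V) (S : {set V}) : bool :=
  [forall v in S, #|S :&: nbhd e v| <= 1]%N.

Definition chi (R : numDomainType) (V : finType) (S : {set V}) : V -> R :=
  fun v => if v \in S then 1 else 0.

(* x in P(G) = conv{chi^S : S co-2-plex} *)
Definition in_P (R : realFieldType) (V : finType) (e : rel V) (x : V -> R) : Prop :=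
  exists lam : {set V} -> R,
    [/\ forall S, 0 <= lam S,
        forall S, ~~ co2plex e S -> lam S = 0,
        \sum_(S : {set V}) lam S = 1
      & forall v, x v = \sum_(S : {set V}) lam S * chi R S v].

Definition in_T (R : realFieldType) (V : finType) (e : rel V) (x : V -> R) : Prop :=
  (forall v, 0 <= x v <= 1) /\
  (forall (w : V) (W : {set V}), W \subset nbhd e w ->
     \sum_(a in W) x a + (#|W|%:R - 1) * x w <= #|W|%:R).

(* Main.v *)
Require Import Defs.
From mathcomp Require Import all_boot all_order all_algebra.
From mathcomp Require Import reals.
From mathcomp Require Import ring lra zify.
Set Implicit Arguments. Unset Strict Implicit. Unset Printing Implicit Defensive.
Import Order.TTheory GRing.Theory Num.Theory.

Section TreeLemmas.
Variables (V : finType) (e : rel V).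

Definition eU (U : {set V}) : rel V := [rel a b | [&& a \in U, b \in U & e a b]].
Definition connU (U : {set V}) := forall a b, a \in U -> b \in U -> connect (eU U) a b.

Lemma path_exit (U : {set V}) s u : u \in U -> path e u s -> last u s \notin U ->
  exists l p, [/\ l \notin U, p \in U & e p l].
Proof.
elim: s u => [|y s IH] u uU /=; first by rewrite uU.
case/andP=> euy ps lst.
case: (boolP (y \in U)) => yU; first exact: IH yU ps lst.
by exists y, u.
Qed.

Lemma exists_new (U : {set V}) u v : connected_graph e -> u \in U -> v \notin U ->
  exists l p, [/\ l \notin U, p \in U & e p l].
Proof.
move=> conn uU vU; have /connectP[s ps lst] := conn u v.
by apply: (path_exit uU ps); rewrite -lst.
Qed.

Lemma path_in (U : {set V}) a s : path (eU U) a s -> {subset s <= U}.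
Proof.
elim: s a => [|y s IH] a //= /andP[/and3P[_ yU _] ps] z.
rewrite inE => /orP[/eqP->//|]; exact: IH ps z.
Qed.

Lemma unique_nb (U : {set V}) l a b : simple_graph e -> acyclic_graph e -> connU U ->
  l \notin U -> a \in U -> b \in U -> e l a -> e l b -> a = b.
Proof.
move=> [sym irr] acy cU lU aU bU ela elb.
apply/eqP; apply/negPn/negP => nab.
have /connectP[s ps lst] := cU a b aU bU.
rewrite {}lst in nab elb bU; move: nab elb.
case: (shortenP ps) => s' ps' us' _ nab elb.
have := acy (l :: a :: s'); rewrite /ucycleb /= ela.
have s'in := path_in ps'.
have ls' : l \notin s' by apply/negP => /s'in; rewrite (negbTE lU).
have la : l != a by apply/negP => /eqP lea; rewrite lea aU in lU.
move: us' => /= /andP[as' us'].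
rewrite inE negb_or la ls' as' us' rcons_path (sub_path _ ps'); last first.
  by move=> y z /and3P[].
rewrite sym elb /=.
case: s' {ps' s'in ls' as' us' elb} nab => [|y s'] /=; first by rewrite eqxx.
by move=> _ /(_ isT).
Qed.

Lemma connU_add (U : {set V}) l p : symmetric e -> connU U -> p \in U -> e p l ->
  connU (l |: U).
Proof.
move=> sym cU pU epl.
have sub : forall a b, connect (eU U) a b -> connect (eU (l |: U)) a b.
  apply: connect_sub => a b /and3P[aU bU eab]; apply: connect1.
  by rewrite /eU /= !inE aU bU eab !orbT.
have lp : connect (eU (l |: U)) l p.
  by apply: connect1; rewrite /eU /= !inE eqxx pU sym epl orbT.
have pl : connect (eU (l |: U)) p l.
  by apply: connect1; rewrite /eU /= !inE eqxx pU epl orbT.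
move=> a b; rewrite !inE => /predU1P[->|aU] /predU1P[->|bU] //.
- exact: connect_trans lp (sub _ _ (cU _ _ pU bU)).
- exact: connect_trans (sub _ _ (cU _ _ aU pU)) pl.
- exact: sub (cU _ _ aU bU).
Qed.

End TreeLemmas.

Local Open Scope ring_scope.


Section Alg.
Variables (R : realType) (V : finType) (e : rel V) (x : V -> R).

Lemma sum_split (l : V) (F : {set V} -> R) :
  \sum_(S : {set V}) F S = \sum_(S : {set V} | l \notin S) (F S + F (l |: S)).
Proof.
rewrite (bigID (fun S : {set V} => l \in S)) /= addrC big_split /=; congr (_ + _).
rewrite (reindex_onto (fun S => l |: S) (fun S => S :\ l)) /=; last first.
  by move=> S lS; rewrite setD1K.
apply: eq_bigl => S; rewrite setU11 /=.
case: (boolP (l \in S)) => lS.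
- apply/negbTE/negP => /eqP E; move: lS; rewrite -E.
  by rewrite setU1K ?inE ?eqxx //; rewrite -E !inE eqxx.
- by rewrite setU1K // eqxx.
Qed.

Lemma chiU (S : {set V}) l v : v != l -> chi R (l |: S) v = chi R S v.
Proof. by move=> vl; rewrite /chi !inE (negbTE vl). Qed.

Lemma chi01 (S : {set V}) v : 0 <= chi R S v <= 1.
Proof. by rewrite /chi; case: (v \in S); rewrite ?lexx ?ler01. Qed.

Lemma co2plex_intro (S : {set V}) :
  (forall v a b, v \in S -> a \in S -> b \in S -> e v a -> e v b -> a = b) ->
  co2plex e S.
Proof.
move=> H; apply/forall_inP => v vS; apply/card_le1_eqP => a b.
rewrite !inE => /andP[aS eva] /andP[bS evb].
exact: H vS bS aS evb eva.
Qed.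

Lemma co2plex_elim (S : {set V}) v a b : co2plex e S ->
  v \in S -> a \in S -> b \in S -> e v a -> e v b -> a = b.
Proof.
move=> /forall_inP H vS aS bS eva evb.
move: (H v vS) => /card_le1_eqP K; apply: K; by rewrite !inE ?aS ?bS.
Qed.

Definition o u v := Num.max 0 (x u + x v - 1).

Lemma oC u v : o u v = o v u.
Proof. by rewrite /o (addrC (x u)). Qed.

Definition Inv (U : {set V}) (lam : {set V} -> R) :=
  [/\ (forall S : {set V}, 0 <= lam S),
      (forall S : {set V}, ~~ co2plex e S -> lam S = 0),
      (forall S : {set V}, ~~ (S \subset U) -> lam S = 0),
      (\sum_(S : {set V}) lam S = 1)
    & (forall v, v \in U -> \sum_(S : {set V}) lam S * chi R S v = x v)] /\
    (forall u v, u \in U -> v \in U -> e u v ->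
        \sum_(S : {set V}) lam S * (chi R S u * chi R S v) = o u v).

Section Ext.
Variables (U : {set V}) (lam : {set V} -> R) (l : V) (f : {set V} -> R).

Definition lam' (S : {set V}) := if l \in S then f (S :\ l) * lam (S :\ l) else (1 - f S) * lam S.

Lemma lam'_notin (S : {set V}) : l \notin S -> lam' S = (1 - f S) * lam S.
Proof. by rewrite /lam' => /negbTE->. Qed.

Lemma lam'_in (S : {set V}) : l \notin S -> lam' (l |: S) = f S * lam S.
Proof. by move=> lS; rewrite /lam' setU11 setU1K. Qed.

Lemma ext_sum (g : {set V} -> R) : (forall S : {set V}, lam S != 0 -> l \notin S) ->
  (forall S : {set V}, l \notin S -> g (l |: S) = g S) ->
  \sum_(S : {set V}) lam' S * g S = \sum_(S : {set V}) lam S * g S.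
Proof.
move=> Hl Hg; rewrite (sum_split l) [RHS](sum_split l); apply: eq_bigr => S lS.
rewrite lam'_notin // lam'_in // Hg //.
have -> : lam (l |: S) = 0.
  by apply/eqP; apply/negP => /negP/Hl; rewrite setU11.
by rewrite mul0r addr0; ring.
Qed.

Lemma ext_l (h : {set V} -> R) : (forall S : {set V}, lam S != 0 -> l \notin S) ->
  \sum_(S : {set V}) lam' S * (chi R S l * h S) = \sum_(S : {set V}) f S * lam S * h (l |: S).
Proof.
move=> Hl; rewrite (sum_split l) [RHS](sum_split l); apply: eq_bigr => S lS.
have -> : lam (l |: S) = 0.
  by apply/eqP; apply/negP => /negP/Hl; rewrite setU11.
rewrite lam'_notin // lam'_in // /chi (negbTE lS) setU11; ring.
Qed.

End Ext.

Lemma ext_Inv (U : {set V}) (lam f : {set V} -> R) (l : V) :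
  Inv U lam -> l \notin U ->
  (forall S : {set V}, 0 <= f S <= 1) ->
  (forall T : {set V}, T \subset U -> co2plex e T -> f T != 0 -> co2plex e (l |: T)) ->
  \sum_(S : {set V}) f S * lam S = x l ->
  (forall u, u \in U -> e l u -> \sum_(S : {set V}) f S * lam S * chi R S u = o l u) ->
  irreflexive e -> symmetric e ->
  Inv (l |: U) (lam' lam l f).
Proof.
move=> [[l0 lco lsub l1 lmarg] ledge] lU f01 fco fsum fedge irr sym.
have Hl : forall S : {set V}, lam S != 0 -> l \notin S.
  move=> S; apply: contraR => lS; apply/eqP/lsub; apply/negP => /subsetP H.
  by move: (H l (negPn lS)); rewrite (negbTE lU).
have chiUl : forall v (S : {set V}), v \in U -> chi R (l |: S) v = chi R S v.
  by move=> v S vU; apply: chiU; apply: contraNneq lU => <-.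
split; first split.
- move=> S; rewrite /lam'; case: ifP => _; have /andP[f0 f1] := f01 (S :\ l);
    have /andP[g0 g1] := f01 S.
  + by apply: mulr_ge0.
  + by apply: mulr_ge0; rewrite // subr_ge0.
- move=> S; apply: contraNeq; rewrite /lam'; case: ifP => lS.
  + rewrite mulf_eq0 negb_or => /andP[fn ln].
    rewrite -(setD1K lS); apply: fco => //.
      by apply: contraNT ln => /lsub ->.
    by apply: contraNT ln => /lco ->.
  + rewrite mulf_eq0 negb_or => /andP[_ ln].
    by apply: contraNT ln => /lco ->.
- move=> S nsub; rewrite /lam'; case: ifP => lS.
  + rewrite lsub ?mulr0 //; apply: contra nsub => /subsetP H.
    apply/subsetP => y yS; case: (y =P l) => [->|/eqP yl]; first by rewrite setU11.
    by rewrite inE H ?orbT // !inE yl.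
  + rewrite lsub ?mulr0 //; apply: contra nsub => H.
    by apply: (subset_trans H); apply: subsetUr.
- transitivity (\sum_(S : {set V}) lam' lam l f S * 1).
    by apply: eq_bigr => S _; rewrite mulr1.
  rewrite ext_sum //; under eq_bigr do rewrite mulr1; exact: l1.
- move=> v; rewrite in_setU1 => /orP[/eqP->|vU].
  + rewrite -fsum; transitivity (\sum_(S : {set V}) lam' lam l f S * (chi R S l * 1)).
      by apply: eq_bigr => S _; rewrite mulr1.
    rewrite (@ext_l lam l f (fun _ => 1) Hl); apply: eq_bigr => S _; by rewrite mulr1.
  + rewrite -(lmarg v vU) (@ext_sum lam l f (fun S => chi R S v) Hl) //.
    by move=> S _; apply: chiUl.
- have key : forall v, v \in U -> e l v ->
      \sum_(S : {set V}) lam' lam l f S * (chi R S l * chi R S v) = o l v.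
    move=> v vU elv; rewrite (@ext_l lam l f (fun S => chi R S v) Hl) -(fedge v vU elv).
    by apply: eq_bigr => S _; rewrite chiUl.
  move=> u v; rewrite !in_setU1 => /orP[/eqP->|uU] /orP[/eqP->|vU] euv.
  + by rewrite irr in euv.
  + exact: key.
  + rewrite oC -(key u uU); last by rewrite sym.
    by apply: eq_bigr => S _; rewrite [chi R S u * _]mulrC.
  + rewrite -(ledge u v uU vU euv) (@ext_sum lam l f (fun S => chi R S u * chi R S v) Hl) //.
    by move=> S _; rewrite !chiUl.
Qed.

End Alg.


Section Inst.
Variables (R : realType) (V : finType) (e : rel V) (x : V -> R).

Lemma sum_chi (W S : {set V}) : \sum_(a in W) chi R S a = #|W :&: S|%:R.
Proof.
rewrite -sum1_card natr_sum (bigID (fun a => a \in S)) /= [X in _ + X]big1; last first.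
  by move=> a /andP[_ /negbTE aS]; rewrite /chi aS.
rewrite addr0; apply: eq_big => [a|a /andP[_ aS]]; first by rewrite !inE.
by rewrite /chi aS.
Qed.

Lemma sum_o_le (p : V) (Z : {set V}) : in_T e x -> Z \subset nbhd e p ->
  \sum_(u in Z) o x p u <= x p.
Proof.
move=> [x01 xT] Zsub.
set Z' := [set u in Z | 0 < x p + x u - 1].
have -> : \sum_(u in Z) o x p u = \sum_(u in Z') (x u + (x p - 1)).
  rewrite (bigID (fun u => 0 < x p + x u - 1)) /= [X in _ + X]big1; last first.
    move=> u /andP[_ nu]; rewrite /o; apply/max_idPl.
    by rewrite leNgt.
  rewrite addr0; apply: eq_big => [u|u /andP[_ pu]]; first by rewrite !inE.
  by rewrite /o; rewrite (max_idPr (ltW pu)); ring.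
have Z'sub : Z' \subset nbhd e p.
  by apply: subset_trans Zsub; apply/subsetP => u; rewrite inE => /andP[].
have H := xT p Z' Z'sub.
rewrite big_split /= sumr_const -mulr_natr.
move: H; set s := \sum_(a in Z') x a; set n := #|Z'|%:R.
move=> H; nra.
Qed.

Lemma chi_mem (S : {set V}) v : chi R S v = (v \in S)%:R.
Proof. by rewrite /chi; case: (v \in S). Qed.

End Inst.


Section Inst2.
Variables (R : realType) (V : finType) (e : rel V) (x : V -> R).

Lemma P_sub_T : in_P e x -> in_T e x.
Proof.
move=> [lam [l0 lco l1 lx]]; split.
- move=> v; rewrite lx; apply/andP; split.
    by apply: sumr_ge0 => S _; apply: mulr_ge0 => //; rewrite /chi; case: (v \in S).
  rewrite -l1; apply: ler_sum => S _; apply: ler_piMr => //.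
  by rewrite /chi; case: (v \in S).
- move=> w W Wsub.
  rewrite (eq_bigr _ (fun a _ => lx a)) lx exchange_big /= mulr_sumr -big_split /=.
  have E : \sum_(S : {set V}) lam S * #|W|%:R = (#|W|%:R : R).
    by rewrite -mulr_suml l1 mul1r.
  rewrite -[X in _ <= X]E.
  apply: ler_sum => S _.
  rewrite -mulr_sumr mulrCA -mulrDr.
  have [->|nz] := eqVneq (lam S) 0; first by rewrite !mul0r.
  have co : co2plex e S by apply: contraNT nz => /lco ->.
  apply: ler_wpM2l => //.
  rewrite sum_chi.
  have k1 : (#|W :&: S| <= #|W|)%N by apply: subset_leq_card; apply: subsetIl.
  rewrite /chi; case: ifP => wS.
  + have k2 : (#|W :&: S| <= 1)%N.
      apply: leq_trans (forall_inP co w wS); apply: subset_leq_card.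
      by rewrite setIC; apply: setIS.
    move: k2; rewrite -(ler_nat R) => k2; lra.
  + move: k1; rewrite -(ler_nat R) => k1; lra.
Qed.

Lemma ext_indep (U : {set V}) (lam : {set V} -> R) (l : V) :
  Inv e x U lam -> l \notin U -> (forall u, u \in U -> ~~ e l u) ->
  in_T e x -> simple_graph e -> exists lam', Inv e x (l |: U) lam'.
Proof.
move=> I lU nb [x01 _] [sym irr].
have I' := I; move: I' => [[l0 lco lsub l1 lmarg] ledge].
exists (lam' lam l (fun _ => x l)); apply: ext_Inv => //.
- move=> T TU coT _; apply: co2plex_intro => v a b.
  have nbT : forall u, u \in T -> ~~ e l u.
    by move=> u uT; apply: nb; apply: (subsetP TU).
  move=> /setU1P[->|vT] /setU1P[->|aT] /setU1P[->|bT] eva evb //;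
  first [ by rewrite irr in eva | by rewrite irr in evb
        | by move: (nbT a aT); rewrite eva | by move: (nbT b bT); rewrite evb
        | by move: (nbT v vT); rewrite sym eva | by move: (nbT v vT); rewrite sym evb
        | exact: co2plex_elim coT vT aT bT eva evb ].
- by rewrite -mulr_sumr l1 mulr1.
- by move=> u uU elu; move: (nb u uU); rewrite elu.
Qed.

End Inst2.


Section Inst3.
Variables (R : realType) (V : finType) (e : rel V) (x : V -> R).

Lemma ext_leaf (U : {set V}) (lam : {set V} -> R) (l p : V) :
  Inv e x U lam -> l \notin U -> p \in U -> e l p ->
  (forall u, u \in U -> e l u -> u = p) ->
  in_T e x -> simple_graph e -> exists lam', Inv e x (l |: U) lam'.
Proof.
move=> I lU pU elp nb xT [sym irr].
have I' := I; move: I' => [[l0 lco lsub l1 lmarg] ledge].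
have [x01 _] := xT.
have lamU : forall S : {set V}, lam S != 0 -> S \subset U.
  by move=> S; apply: contraNT => /lsub ->.
have lamC : forall S : {set V}, lam S != 0 -> co2plex e S.
  by move=> S; apply: contraNT => /lco ->.
pose a (S : {set V}) : R := ((p \in S) && (S :&: nbhd e p == set0))%:R.
pose b (S : {set V}) : R := (p \notin S)%:R.
pose mA := \sum_(S : {set V}) lam S * a S.
pose N := nbhd e p :&: U.
have F1 : \sum_(S : {set V}) lam S * b S = 1 - x p.
  rewrite -l1 -(lmarg p pU) -sumrB; apply: eq_bigr => S _.
  by rewrite /b /chi; case: (p \in S) => /=; ring.
have F2 : x p = mA + \sum_(u in N) o x p u.
  have E : forall u, u \in N -> o x p u = \sum_(S : {set V}) lam S * (chi R S p * chi R S u).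
    move=> u; rewrite !inE => /andP[epu uU]; by rewrite (ledge p u pU uU epu).
  rewrite (eq_bigr _ E) exchange_big /= -(lmarg p pU) /mA -big_split /=.
  apply: eq_bigr => S _; rewrite -mulr_sumr -mulrDr.
  have [->|nz] := eqVneq (lam S) 0; first by rewrite !mul0r.
  congr (_ * _).
  have SU := lamU S nz; have coS := lamC S nz.
  rewrite /a /chi; case: (boolP (p \in S)) => pS /=; last first.
    by rewrite big1 ?addr0 // => u _; rewrite mul0r.
  under eq_bigr do rewrite mul1r.
  rewrite sum_chi.
  case: (eqVneq (S :&: nbhd e p) set0) => Hs /=.
  - have -> : N :&: S = set0.
      apply/eqP; rewrite -subset0 -Hs; apply/subsetP => u.
      by rewrite !inE => /andP[/andP[epu _] uS]; rewrite uS epu.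
    by rewrite cards0 addr0.
  - have [u0 u0S] := set0Pn _ Hs.
    have -> : N :&: S = [set u0].
      apply/setP => u; rewrite !inE.
      move: u0S; rewrite !inE => /andP[u0S epu0].
      apply/idP/idP => [/andP[/andP[epu uU] uS]|/eqP->].
        by apply/eqP; apply: (co2plex_elim coS pS uS u0S epu epu0).
      by rewrite epu0 u0S (subsetP SU).
    by rewrite cards1 add0r.
have F3 : o x l p + \sum_(u in N) o x p u <= x p.
  have lN : l \notin N by rewrite inE negb_and lU orbT.
  rewrite oC -(big_setU1 _ lN) /=; apply: (@sum_o_le R V e x p _ xT).
  apply/subsetP => u; rewrite !inE => /orP[/eqP->|/andP[]//].
  by rewrite sym.
have mAo : o x l p <= mA by lra.
have o0 : 0 <= o x l p by rewrite /o le_max lexx.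
have oge : x l + x p - 1 <= o x l p by rewrite /o le_max lexx orbT.
have ol : o x l p <= x l.
  have /andP[xl0 xl1] := x01 l; have /andP[xp0 xp1] := x01 p.
  rewrite /o ge_max xl0 /=; lra.
pose al := o x l p / mA.
pose be := (x l - o x l p) / (1 - x p).
have alE : al * mA = o x l p.
  have [mA0|mAn] := eqVneq mA 0.
    by rewrite mA0 mulr0; apply/eqP; rewrite eq_le o0 andTb -mA0.
  by rewrite /al divfK.
have beE : be * (1 - x p) = x l - o x l p.
  have [xp1|xpn] := eqVneq (1 - x p) 0.
    have xp : x p = 1 by apply/eqP; rewrite -subr_eq0 -oppr_eq0 opprB xp1.
    rewrite xp1 mulr0; apply/esym/eqP; rewrite subr_eq0; apply/eqP.
    by rewrite /o xp addrK; apply/esym/max_idPr; have /andP[] := x01 l.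
  by rewrite /be divfK.
have al01 : 0 <= al <= 1.
  have mA0 : 0 <= mA by lra.
  rewrite /al divr_ge0 //=.
  have [mAz|mAn] := eqVneq mA 0; first by rewrite mAz invr0 mulr0 ler01.
  by rewrite ler_pdivrMr ?mul1r // lt_def mAn.
have be01 : 0 <= be <= 1.
  have /andP[xp0 xp1] := x01 p.
  rewrite /be divr_ge0 ?subr_ge0 //=.
  have [xz|xn] := eqVneq (1 - x p) 0; first by rewrite xz invr0 mulr0 ler01.
  rewrite ler_pdivrMr ?mul1r; first lra.
  by rewrite lt_def xn subr_ge0.
pose f (S : {set V}) := al * a S + be * b S.
exists (lam' lam l f); apply: ext_Inv => //.
- move=> S; rewrite /f /a /b; case: (p \in S); case: (_ == set0) => /=;
    rewrite ?mulr1 ?mulr0 ?addr0 ?add0r ?lexx ?ler01 //.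
- move=> T TU coT fT.
  have Hc : ((p \in T) && (T :&: nbhd e p == set0)) || (p \notin T).
    move: fT; rewrite /f /a /b; case: (p \in T); case: (_ == set0);
      by rewrite /= ?mulr0 ?mulr1 ?addr0 ?eqxx.
  apply: co2plex_intro => v a' b'.
  have nbT : forall u, u \in T -> e l u -> u = p.
    by move=> u uT; apply: nb; apply: (subsetP TU).
  have claim : forall v w, v \in T -> w \in T -> e v w -> e v l -> False.
    move=> v0 w vT wT evw evl.
    have vp : v0 = p by apply: nbT => //; rewrite sym.
    move: Hc; rewrite vp in vT evw; rewrite vT /= orbF => /eqP Hs.
    by move: (in_set0 w); rewrite -Hs !inE wT evw.
  move=> /setU1P[->|vT] /setU1P[->|aT] /setU1P[->|bT] eva evb //;
  first [ by rewrite irr in eva | by rewrite irr in evb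
        | by rewrite (nbT _ aT eva) (nbT _ bT evb)
        | by case: (claim v b' vT bT evb eva)
        | by case: (claim v a' vT aT eva evb)
        | exact: co2plex_elim coT vT aT bT eva evb ].
- have E : forall S : {set V}, f S * lam S = al * (lam S * a S) + be * (lam S * b S).
    by move=> S; rewrite /f; ring.
  by rewrite (eq_bigr _ (fun S _ => E S)) big_split /= -!mulr_sumr F1 -/mA alE beE; ring.
- move=> u uU elu; rewrite (nb u uU elu).
  have E : forall S : {set V}, f S * lam S * chi R S p = al * (lam S * a S).
    move=> S; rewrite /f /a /b /chi; case: (p \in S) => /=; ring.
  by rewrite (eq_bigr _ (fun S _ => E S)) -mulr_sumr -/mA alE.
Qed.

End Inst3.


Section Build.
Variables (R : realType) (V : finType) (e : rel V) (x : V -> R).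

Lemma build n : is_tree e -> in_T e x -> (n <= #|V|)%N ->
  exists (U : {set V}) (lam : {set V} -> R), [/\ #|U| = n, connU e U & Inv e x U lam].
Proof.
move=> [sg [_ [conn acy]]] xT; have [sym irr] := sg.
elim: n => [_|n IH nV].
  exists set0, (fun S : {set V} => (S == set0)%:R); split.
  - exact: cards0.
  - by move=> a b; rewrite in_set0.
  split; first split.
  - by move=> S; case: (S == set0); rewrite ?ler01 ?lexx.
  - move=> S; case: (eqVneq S set0) => [->|] //= H.
    by case/negP: H; apply/forall_inP => v; rewrite in_set0.
  - move=> S; case: (eqVneq S set0) => [->|] //=.
    by rewrite sub0set.
  - rewrite (bigD1 set0) //= eqxx big1 ?addr0 // => S /negbTE ->; done.
  - by move=> v; rewrite in_set0.
  - by move=> u v; rewrite in_set0.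
have [U [lam [cU connU0 I]]] := IH (ltnW nV).
have [l lU] : exists l, l \notin U.
  have : (~: U) != set0.
    rewrite -card_gt0; have := cardsC U; rewrite cU; move: nV; lia.
  by case/set0Pn => l; rewrite inE => lU; exists l.
case: (eqVneq U set0) => [U0|Un].
  subst U.
  have [lam' I'] := ext_indep I lU (fun u (H : u \in set0) => ltac:(by rewrite in_set0 in H)) xT sg.
  exists (l |: set0), lam'; split => //.
  - by rewrite cardsU1 lU -cU.
  - move=> a b; rewrite setU0 !inE => /eqP-> /eqP->; exact: connect0.
have [u uU] := set0Pn _ Un.
have [l' [p [l'U pU epl']]] := exists_new conn uU lU.
have nb : forall w, w \in U -> e l' w -> w = p.
  move=> w wU el'w; apply: (unique_nb sg acy connU0 l'U wU pU el'w).
  by rewrite sym.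
have el'p : e l' p by rewrite sym.
have [lam' I'] := ext_leaf I l'U pU el'p nb xT sg.
exists (l' |: U), lam'; split => //.
- by rewrite cardsU1 l'U cU.
- exact: connU_add sym connU0 pU epl'.
Qed.

End Build.


Local Close Scope ring_scope.
Unset Implicit Arguments.

Theorem mainTheorem10 (R : realType) (V : finType) (e : rel V) :
  is_tree e -> forall x : V -> R, in_P e x <-> in_T e x.
Proof.
move=> tr x; split; first exact: P_sub_T.
move=> xT.
have [U [lam [cU _ [[l0 lco lsub l1 lmarg] _]]]] := build tr xT (leqnn #|V|).
have UT : U = setT.
  apply/eqP; rewrite eqEcard subsetT cardsT cU leqnn //.
exists lam; split => // v.
by rewrite lmarg // UT inE.
Qed.
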